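(* For all positive integers $N$ and $t$, letting $n=N(2t+2)$, there exist an unweighted directed graph $G=(V,E)$ with $n$ vertices and a subset $S\subseteq V$ with $|S|=N=\Theta(n/t)$ such that $\mathrm{outecc}_G(s)=t+1$ for every $s\in S$, and every subgraph $H=(V,E')$, $E'\subseteq E$, satisfying $\mathrm{outecc}_H(s)<2\,\mathrm{outecc}_G(s)$ for all $s\in S$ contains at least $N^2$ edges, i.e. $\Omega(n^2/t^2)$ edges.
   Context: $d_G(u,v)$ is the directed shortest-path distance and $\mathrm{outecc}_G(x)=\max_{y\in V}d_G(x,y)$. *)

(* Defs.v *)
From mathcomp Require Import all_boot.
Set Implicit Arguments. Unset Strict Implicit. Unset Printing Implicit Defensive.

(* A directed graph on a finite vertex type T is given by its edge set
   E : {set T * T}; (u, v) \in E is the arc u -> v. *)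

Fixpoint reach (T : finType) (E : {set T * T}) (k : nat) (u : T) : {set T} :=
  match k with
  | 0 => [set u]
  | k'.+1 => reach E k' u :|: [set y | [exists x in reach E k' u, (x, y) \in E]]
  end.

(* Directed shortest-path distance d_E(u,v): Some d if v is reachable from u
   (d = least k with v reachable within k steps; shortest paths have
   length < #|T|), None (= +infinity) otherwise. *)
Definition dist (T : finType) (E : {set T * T}) (u v : T) : option nat :=
  let k := find (fun k => v \in reach E k u) (iota 0 #|T|) in
  if k < #|T| then Some k else None.

Definition outecc (T : finType) (E : {set T * T}) (x : T) : option nat :=
  if [forall y, dist E x y != None]
  then Some (\max_(y : T) odflt 0 (dist E x y))
  else None.

Definition ltx (a b : option nat) : bool :=
  match a, b with
  | Some x, Some y => x < y
  | Some _, None => true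
  | None, _ => false
  end.

Definition dblx (a : option nat) : option nat := omap (fun x => 2 * x) a.

(* Main.v *)
Require Import Defs.
From mathcomp Require Import all_boot zify.
Set Implicit Arguments. Unset Strict Implicit. Unset Printing Implicit Defensive.

Lemma reach0 (T : finType) (E : {set T * T}) u : u \in reach E 0 u.
Proof. by rewrite /= in_set1. Qed.

Lemma reach_step (T : finType) (E : {set T * T}) k u x y :
  x \in reach E k u -> (x, y) \in E -> y \in reach E k.+1 u.
Proof.
move=> hx he; rewrite /= in_setU; apply/orP; right; rewrite inE.
by apply/existsP; exists x; rewrite hx he.
Qed.

Lemma reach_pot (T : finType) (E : {set T * T}) u (f : T -> nat) :
  f u = 0 -> (forall x y, (x, y) \in E -> f y <= f x + 1) ->
  forall k v, v \in reach E k u -> f v <= k.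
Proof.
move=> hu hf; elim=> [|k IH] v /=.
  by rewrite in_set1 => /eqP ->; rewrite hu.
rewrite in_setU => /orP [/IH h|]; first lia.
rewrite inE => /existsP [x /andP [hx he]].
have := hf _ _ he; have := IH _ hx; lia.
Qed.

Lemma dist_some (T : finType) (E : {set T * T}) u v d :
  dist E u v = Some d -> v \in reach E d u.
Proof.
rewrite /dist; case: ifP => // H [<-].
have hh : has (fun k => v \in reach E k u) (iota 0 #|T|) by rewrite has_find size_iota.
have := nth_find 0 hh; rewrite nth_iota //.
Qed.

Lemma dist_exact (T : finType) (E : {set T * T}) u v d :
  v \in reach E d u -> (forall k, v \in reach E k u -> d <= k) -> d < #|T| ->
  dist E u v = Some d.
Proof.
move=> hd hmin hlt; rewrite /dist.
set p := (fun k => v \in reach E k u).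
have hh : has p (iota 0 #|T|).
  by apply/hasP; exists d => //; rewrite mem_iota.
have hf := nth_find 0 hh; rewrite has_find size_iota in hh.
rewrite nth_iota // in hf.
have h1 := hmin _ hf.
case: (ltngtP d (find p (iota 0 #|T|))) => h2.
- have := before_find 0 h2; rewrite nth_iota //= => hb.
  by rewrite /p hd in hb.
- lia.
- by rewrite -h2 hlt.
Qed.

Definition edgek (t kx rx ky ry : nat) : bool :=
  [|| (rx == 0) && (ry == 1),
      (kx == ky) && (1 <= rx) && (rx <= t) && (ry == rx.+1),
      (kx == ky) && (rx == t) && (ry == 0)
    | (kx == ky) && (rx == 1) && (t + 2 <= ry)].

Definition gk (t i k r : nat) : nat :=
  if r == 0 then (if k == i then 0 else t + 1) else if r <= t + 1 then r else 2.

Definition fk (t i j k r : nat) : nat :=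
  if r == 0 then (if k == i then 0 else t + 1)
  else if r <= t + 1 then (if k == j then r + t + 1 else r) else 0.

Lemma edgek_irr t k r : 0 < t -> edgek t k r k r = false.
Proof. rewrite /edgek; lia. Qed.

Lemma gpot t i kx rx ky ry : 0 < t -> rx < 2 * t + 2 -> ry < 2 * t + 2 ->
  edgek t kx rx ky ry -> gk t i ky ry <= gk t i kx rx + 1.
Proof. rewrite /edgek /gk => *; do ?case: ifP => ?; lia. Qed.

Lemma fpot t i j kx rx ky ry : 0 < t -> rx < 2 * t + 2 -> ry < 2 * t + 2 ->
  edgek t kx rx ky ry -> ~~ [&& kx == i, rx == 0, ky == j & ry == 1] ->
  fk t i j ky ry <= fk t i j kx rx + 1.
Proof. rewrite /edgek /fk => *; do ?case: ifP => ?; lia. Qed.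

Theorem theorem7p2 (N t : nat) (hN : 0 < N) (ht : 0 < t) :
  exists (E : {set 'I_(N * (2 * t + 2)) * 'I_(N * (2 * t + 2))})
         (S : {set 'I_(N * (2 * t + 2))}),
    (forall x, (x, x) \notin E) /\
    #|S| = N /\
    (forall s, s \in S -> outecc E s = Some (t + 1)) /\
    (forall E' : {set 'I_(N * (2 * t + 2)) * 'I_(N * (2 * t + 2))},
        E' \subset E ->
        (forall s, s \in S -> ltx (outecc E' s) (dblx (outecc E s))) ->
        N ^ 2 <= #|E'|).
Proof.
have hM : 0 < 2 * t + 2 by lia.
have hn : 0 < N * (2 * t + 2) by rewrite muln_gt0 hN.
pose d0 : 'I_(N * (2 * t + 2)) := Ordinal hn.
pose mk (k r : nat) : 'I_(N * (2 * t + 2)) := insubd d0 (k * (2 * t + 2) + r).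
have valmk : forall k r, k < N -> r < 2 * t + 2 -> val (mk k r) = k * (2 * t + 2) + r.
  move=> k r hk hr; rewrite val_insubd ifT //; nia.
have divmk : forall k r, r < 2 * t + 2 -> (k * (2 * t + 2) + r) %/ (2 * t + 2) = k.
  by move=> k r hr; rewrite divnMDl // divn_small // addn0.
have modmk : forall k r, r < 2 * t + 2 -> (k * (2 * t + 2) + r) %% (2 * t + 2) = r.
  by move=> k r hr; rewrite modnMDl modn_small.
have vk : forall v : 'I_(N * (2 * t + 2)), val v %/ (2 * t + 2) < N.
  by move=> v; rewrite ltn_divLR // (ltn_ord v).
have vr : forall v : 'I_(N * (2 * t + 2)), val v %% (2 * t + 2) < 2 * t + 2.
  by move=> v; rewrite ltn_pmod.
have vdec : forall v : 'I_(N * (2 * t + 2)),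
    v = mk (val v %/ (2 * t + 2)) (val v %% (2 * t + 2)).
  by move=> v; apply: val_inj; rewrite valmk // -divn_eq.
have mk_inj : forall a b r, a < N -> b < N -> r < 2 * t + 2 -> mk a r = mk b r -> a = b.
  move=> a b r ha hb hr /(congr1 (fun v => val v %/ (2 * t + 2))).
  by rewrite !valmk // !divmk.
pose E := [set e : 'I_(N * (2 * t + 2)) * 'I_(N * (2 * t + 2)) |
  edgek t (val e.1 %/ (2 * t + 2)) (val e.1 %% (2 * t + 2))
          (val e.2 %/ (2 * t + 2)) (val e.2 %% (2 * t + 2))].
pose S := [set mk (val k) 0 | k : 'I_N].
have memE : forall kx rx ky ry, kx < N -> rx < 2 * t + 2 -> ky < N -> ry < 2 * t + 2 ->
   ((mk kx rx, mk ky ry) \in E) = edgek t kx rx ky ry.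
  by move=> kx rx ky ry *; rewrite inE /= !valmk // !divmk // !modmk.
have outG : forall i, i < N -> outecc E (mk i 0) = Some (t + 1).
  move=> i hi.
  pose g := fun v : 'I_(N * (2 * t + 2)) => gk t i (val v %/ (2 * t + 2)) (val v %% (2 * t + 2)).
  have gpotE : forall x y, (x, y) \in E -> g y <= g x + 1.
    by move=> x y; rewrite inE /=; apply: gpot => //; apply: vr.
  have gmk : forall k r, k < N -> r < 2 * t + 2 -> g (mk k r) = gk t i k r.
    by move=> k r hk hr; rewrite /g valmk // divmk // modmk.
  have gs : g (mk i 0) = 0 by rewrite gmk // /gk eqxx eqxx.
  have path : forall r, 1 <= r <= t + 1 -> forall k, k < N -> mk k r \in reach E r (mk i 0).
    elim=> [//|r IH] hr k hk.
    case: r IH hr => [|r] IH hr.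
      by apply: (reach_step (reach0 _ _)); rewrite memE /edgek //; lia.
    apply: (reach_step (IH _ _ hk)); first lia.
    rewrite memE /edgek //; lia.
  have hreach : forall v, v \in reach E (g v) (mk i 0).
    move=> v; rewrite (vdec v).
    have := vk v; have := vr v.
    move: (val v %/ (2 * t + 2)) (val v %% (2 * t + 2)) => k r hr hk.
    rewrite gmk // /gk.
    case: ifP => [/eqP r0|rn0].
      subst r; case: ifP => [/eqP ->|kn]; first exact: reach0.
      rewrite addn1; apply: (reach_step (path t _ _ hk)); first lia.
      rewrite memE /edgek //; lia.
    case: ifP => hr2; first by apply: path => //; lia.
    apply: (reach_step (path 1 _ _ hk)); first lia.
    rewrite memE /edgek //; lia.
  have gle : forall v, g v <= t + 1.
    by move=> v; rewrite /g /gk; do ?case: ifP => ?; lia.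
  have hdist : forall v, dist E (mk i 0) v = Some (g v).
    move=> v; apply: dist_exact; first exact: hreach.
      by move=> k hk; apply: (reach_pot gs gpotE hk).
    rewrite card_ord; have := gle v; nia.
  rewrite /outecc ifT; last by apply/forallP => v; rewrite hdist.
  congr Some; apply/eqP; rewrite eqn_leq; apply/andP; split.
    by apply/bigmax_leqP => v _; rewrite hdist /=.
  have := @leq_bigmax _ (fun v => odflt 0 (dist E (mk i 0) v)) (mk i (t + 1)).
  rewrite hdist /= gmk //; last lia.
  rewrite /gk; do ?case: ifP => ?; lia.
exists E, S.
split.
  by move=> x; rewrite inE /= edgek_irr.
split.
  rewrite card_imset ?card_ord // => a b /mk_inj h; apply: val_inj; apply: h; rewrite ?ltn_ord //.
split.
  by move=> s /imsetP [k _ ->]; apply: outG; apply: ltn_ord.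
move=> E' hsub hlt.
have key : forall i j, i < N -> j < N -> (mk i 0, mk j 1) \in E'.
  move=> i j hi hj; apply/negPn/negP => hnot.
  have hiS : mk i 0 \in S by apply/imsetP; exists (Ordinal hi).
  have := hlt (mk i 0) hiS.
  rewrite outG // /dblx /outecc /=.
  case: ifP => // /forallP hall /= hmax.
  pose y := mk j (t + 1).
  have := hall y.
  case hd: (dist E' (mk i 0) y) => [d|] // _.
  have hyd := dist_some hd.
  have hdle : d <= \max_y odflt 0 (dist E' (mk i 0) y).
    by have := @leq_bigmax _ (fun v => odflt 0 (dist E' (mk i 0) v)) y; rewrite hd.
  pose f := fun v : 'I_(N * (2 * t + 2)) => fk t i j (val v %/ (2 * t + 2)) (val v %% (2 * t + 2)).
  have fs : f (mk i 0) = 0 by rewrite /f valmk // divmk // modmk // /fk eqxx eqxx.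
  have fpotE : forall x z, (x, z) \in E' -> f z <= f x + 1.
    move=> x z hxz.
    have := subsetP hsub _ hxz; rewrite inE /= => he.
    apply: fpot => //.
    apply/negP => /and4P [/eqP h1 /eqP h2 /eqP h3 /eqP h4].
    move: hxz; rewrite (vdec x) (vdec z) h1 h2 h3 h4.
    by move/negP: hnot.
  have := reach_pot fs fpotE hyd.
  have hy : val y = j * (2 * t + 2) + (t + 1) by rewrite valmk //; lia.
  have hb : t + 1 < 2 * t + 2 by lia.
  have hlt2 := leq_ltn_trans hdle hmax.
  rewrite /f hy divmk // modmk // /fk; do ?case: ifP => ?; lia.
have hsubP : [set (mk (val p.1) 0, mk (val p.2) 1) | p : 'I_N * 'I_N] \subset E'.
  by apply/subsetP => e /imsetP [[a b] _ ->]; apply: key; apply: ltn_ord.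
have := subset_leq_card hsubP.
rewrite card_imset; last first.
  move=> [a b] [c d] /= [/mk_inj h1 /mk_inj h2].
  have e1 : a = c by apply: val_inj; apply: h1; rewrite ?ltn_ord //; lia.
  have e2 : b = d by apply: val_inj; apply: h2; rewrite ?ltn_ord //; lia.
  by rewrite e1 e2.
by rewrite card_prod !card_ord mulnn.
Qed.
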